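(* Let $G$ be a tricyclic graph with at least one pendant vertex whose base $\widetilde G$ consists of three cycles that pairwise have exactly one vertex $u$ in common (i.e. $\widetilde G$ is the union of three cycles sharing only the single vertex $u$). Then $G\notin\mathscr{G}_{a,b}$ for all integers $a,b$.
   Context: All graphs are simple and connected; $d_G(v)$ is the degree of $v$, $N_G(v)$ its neighbourhood. A tricyclic graph is a connected graph with $|E_G|=|V_G|+2$. For integers $a,b$, $\mathscr{G}_{a,b}$ is the set of connected graphs $G$ such that for every $v\in V_G$, $\sum_{u\in N_G(v)}d_G(u)=a\,d_G(v)+b-d_G(v)^2$ (equivalently, $G$ is connected and its signless Laplacian $D+A$ has exactly two main eigenvalues with parameters $a,b$). A pendant vertex is a vertex of degree $1$. The base $\widetilde{G}$ of $G$ is the subgraph obtained from $G$ by repeatedly deleting pendant vertices until none remain. *)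

(* Defs.v *)
From mathcomp Require Import all_boot all_order all_algebra.
Set Implicit Arguments. Unset Strict Implicit. Unset Printing Implicit Defensive.
Import GRing.Theory Num.Theory.

Section Graphs.
Variables (T : finType) (e : rel T).

Definition simple_graph := symmetric e /\ irreflexive e.

Definition connected_graph := forall x y : T, connect e x y.

Definition edge_set : {set {set T}} :=
  [set E : {set T} | [exists x, exists y, (E == [set x; y]) && e x y]].

Definition deg (v : T) : nat := #|[set w | e v w]|.

Definition pendant (v : T) := deg v == 1%N.

Definition tricyclic := connected_graph /\ #|edge_set| = (#|T| + 2)%N.

Definition deg_in (S : {set T}) (v : T) : nat := #|[set w in S | e v w]|.

Definition prune (S : {set T}) : {set T} := [set v in S | deg_in S v != 1%N].

(* The base: repeatedly delete pendant vertices until none remain; at most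
   #|T| rounds can remove something, so #|T| rounds reach the fixpoint. *)
Definition base : {set T} := iter #|T| prune setT.

Definition is_cycle (c : seq T) : bool := [&& uniq c, (3 <= size c)%N & cycle e c].

Definition cycle_edge (c : seq T) (x y : T) :=
  (x \in c) && (y \in c) && ((next c x == y) || (next c y == x)).

(* The subgraph induced on B (base of a simple graph is induced) is the union of
   three cycles pairwise sharing exactly the vertex u. *)
Definition three_cycles_at (B : {set T}) (u : T) :=
  exists c1 c2 c3 : seq T,
    [/\ [&& is_cycle c1, is_cycle c2 & is_cycle c3],
        [/\ [set x in c1] :&: [set x in c2] = [set u],
            [set x in c1] :&: [set x in c3] = [set u] &
            [set x in c2] :&: [set x in c3] = [set u]],
        B = [set x in c1] :|: [set x in c2] :|: [set x in c3] &
        forall x y, x \in B -> y \in B ->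
          e x y = [|| cycle_edge c1 x y, cycle_edge c2 x y | cycle_edge c3 x y]].

Definition in_Gab (a b : int) :=
  connected_graph /\
  forall v : T, (\sum_(w | e v w) (deg w)%:Z)%R = (a * (deg v)%:Z + b - ((deg v)%:Z) ^+ 2)%R.

End Graphs.

(* Main.v *)
Require Import Defs.
From mathcomp Require Import all_boot all_order all_algebra.
From mathcomp Require Import zify ring lra.
Import GRing.Theory Num.Theory.
Set Implicit Arguments. Unset Strict Implicit. Unset Printing Implicit Defensive.

Lemma closed_all (T : finType) (e : rel T) (X : {set T}) :
  connected_graph e -> (forall x y, x \in X -> e x y -> y \in X) ->
  forall x0 y, x0 \in X -> y \in X.
Proof.
move=> Hc Hcl x0 y Hx0; have /connectP [p pth ->] := Hc x0 y.
elim: p x0 Hx0 pth => //= z p IH x0 Hx0 /andP[exz pth].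
exact: IH (Hcl _ _ Hx0 exz) pth.
Qed.

Lemma prune_sub (T : finType) (e : rel T) S : prune e S \subset S.
Proof. by apply/subsetP => v; rewrite inE => /andP[]. Qed.

Lemma iter_sub (T : finType) (e : rel T) n m : n <= m ->
  iter m (prune e) setT \subset iter n (prune e) setT.
Proof.
elim: m => [|m IH]; first by rewrite leqn0 => /eqP ->.
rewrite leq_eqVlt => /orP[/eqP -> //|]; rewrite ltnS => /IH.
apply: subset_trans; rewrite iterS; exact: prune_sub.
Qed.

Lemma inS1 (T : finType) (e : rel T) v : (v \in prune e setT) = (deg e v != 1).
Proof.
rewrite /prune inE in_setT /= /deg_in /deg.
by rewrite (_ : [set w in setT | e v w] = [set w | e v w]) //; apply/setP => w; rewrite !inE.
Qed.

Lemma deg_in_le (T : finType) (e : rel T) S v : deg_in e S v <= deg e v.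
Proof. by apply: subset_leq_card; apply/subsetP => w; rewrite !inE => /andP[]. Qed.

Lemma deg_in1_uniq (T : finType) (e : rel T) S v y y' : deg_in e S v = 1 ->
  y \in S -> y' \in S -> e v y -> e v y' -> y = y'.
Proof.
move=> /eqP /cards1P [z Hz] yS y'S ey ey'.
have : y \in [set w in S | e v w] by rewrite inE yS ey.
have : y' \in [set w in S | e v w] by rewrite inE y'S ey'.
by rewrite Hz !inE => /eqP -> /eqP ->.
Qed.

Lemma deg1_uniq (T : finType) (e : rel T) v y y' : deg e v = 1 ->
  e v y -> e v y' -> y = y'.
Proof.
move=> Hd; apply: (@deg_in1_uniq _ _ setT) => //.
by rewrite /deg_in -Hd /deg (_ : [set w in setT | e v w] = [set w | e v w]) //; apply/setP => w; rewrite !inE.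
Qed.

Lemma sumZ (T : finType) (P : pred T) (F : T -> nat) :
  (\sum_(w | P w) (F w)%:Z)%R = ((\sum_(w | P w) F w)%N%:Z)%R.
Proof. by rewrite (big_morph Posz PoszD (erefl _)). Qed.

Lemma sum1_pred (T : finType) (P : pred T) : \sum_(w | P w) 1 = #|P|.
Proof. by rewrite sum1_card. Qed.

Lemma deg_sum (T : finType) (e : rel T) v : deg e v = \sum_(w | e v w) 1.
Proof. by rewrite sum1_card /deg cardsE. Qed.

Lemma sum_pos_ex (T : finType) (P : pred T) : 0 < \sum_(v | P v) 1 -> exists v, P v.
Proof.
case: (pickP P) => [v Hv|H0]; first by exists v.
by rewrite big_pred0.
Qed.

Lemma pend_supp (T : finType) (e : rel T) (a b : int) z y :
  in_Gab e a b -> deg e z = 1 -> e z y -> ((deg e y)%:Z = a + b - 1)%R.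
Proof.
move=> [_ H] Hz ezy; have := H z.
rewrite (big_pred1 y); last first.
  move=> w /=; apply/idP/eqP => [ezw|->//]. exact: (deg1_uniq Hz ezw ezy).
rewrite Hz => ->; rewrite expr1n mulr1; lia.
Qed.

Lemma prune_def (T : finType) (e : rel T) S v :
  (v \in prune e S) = (v \in S) && (deg_in e S v != 1).
Proof. by rewrite inE. Qed.



Lemma deg_inT (T : finType) (e : rel T) v : deg_in e setT v = deg e v.
Proof. by rewrite /deg_in /deg (_ : [set w in setT | e v w] = [set w | e v w]) //; apply/setP => w; rewrite !inE. Qed.

Lemma mem_setin (T : finType) (S : {set T}) (P : pred T) y :
  (y \in [set x in S | P x]) = (y \in S) && P y.
Proof. by rewrite inE. Qed.

Lemma deg_in_mono (T : finType) (e : rel T) v (S' S : {set T}) : S' \subset S ->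
  deg_in e S' v <= deg_in e S v.
Proof.
move=> H; apply: subset_leq_card; apply/subsetP => y; rewrite !inE => /andP[yS' ->].
by rewrite (subsetP H _ yS').
Qed.

Lemma rank1_pend (T : finType) (e : rel T) w :
  w \in prune e setT -> w \notin prune e (prune e setT) ->
  deg_in e (prune e setT) w = 1 /\ exists z, e w z /\ deg e z = 1.
Proof.
move=> w1; rewrite prune_def w1 /= negbK => /eqP Hd; split => //.
have w1' := w1; rewrite inS1 in w1'.
have : ~~ ([set v | e w v] \subset [set v in prune e setT | e w v]).
  apply/negP => /subset_leq_card; rewrite -/(deg e w) -/(deg_in e (prune e setT) w) Hd.
  have := deg_in_le e (prune e setT) w; rewrite Hd.
  move: w1'; case: (deg e w) => [|[|n]] //.
case/subsetPn => z; rewrite !inE => ewz; rewrite ewz andbT /= negbK deg_inT => /eqP dz.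
by exists z.
Qed.

Lemma desc (T : finType) (e : rel T) r v : 0 < r ->
  v \in iter r (prune e) setT -> v \notin iter r.+1 (prune e) setT ->
  exists w, w \in prune e setT /\ w \notin prune e (prune e setT).
Proof.
elim: r v => [//|r IH] v _.
case: r IH => [|r] IH.
  move=> H1 H2; exists v; split => //.
set Sr := iter r.+1 (prune e) setT.
move=> vS; rewrite iterS prune_def vS /= negbK => /eqP Hd.
move: vS; rewrite iterS prune_def -/Sr => /andP[vSr Hd'].
have : ~~ ([set y in Sr | e v y] \subset [set y in prune e Sr | e v y]).
  apply/negP => /subset_leq_card; rewrite -/(deg_in e Sr v) -/(deg_in e (prune e Sr) v) Hd.
  have := deg_in_mono e v (prune_sub e Sr).
  rewrite Hd.
  by move: Hd'; case: (deg_in e Sr v) => [|[|n]].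
case/subsetPn => y; rewrite (mem_setin Sr) (mem_setin (prune e Sr)) => /andP[ySr evy]; rewrite evy andbT => ynS.
exact: (IH y isT ySr ynS).
Qed.

Lemma findrank (T : finType) (e : rel T) n v :
  v \in prune e setT -> v \notin iter n (prune e) setT ->
  exists r, [/\ 0 < r, v \in iter r (prune e) setT & v \notin iter r.+1 (prune e) setT].
Proof.
move=> v1; elim: n => [|n IH]; first by rewrite /= in_setT.
case: (boolP (v \in iter n (prune e) setT)) => [vn|vn] vn1; last exact: IH.
exists n; split => //; case: n {IH} vn vn1 => // _; by rewrite /= v1.
Qed.

Lemma alg1i (a K D j o s m : int) :
  (2 <= K -> 
  K - 1 + D = a * K + (K + 1 - a) - K * K ->
  j * K + s = a * D + (K + 1 - a) - D * D ->
  D = j + o -> 1 <= j -> 1 <= o -> 2 * o <= s -> m = a - K - 1 -> False)%R.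
Proof.
move=> K2 Hw Hp HD j1 o1 so hm.
have Hw' : (D - 1 = m * (K - 1))%R by rewrite hm; lia.
have m1 : (1 <= m)%R by nia.
have Hs : (s - 2 * o = (D - 1) * (m - D) + o * (K - 2))%R.
  have ha : a = (m + K + 1)%R by rewrite hm; lia.
  rewrite ha in Hp. nia.
have h1 : (o * (K - 2) <= (D - 1) * (K - 2))%R.
  have hk : (0 <= K - 2)%R by lia.
  have ho : (o <= D - 1)%R by lia.
  clear -hk ho; nia.
have h2 : ((D - 1) * (m - D) + (D - 1) * (K - 2) =
            - (D - 1) * ((m - 1) * (K - 2) + 1))%R.
  have hD : D = (m * (K - 1) + 1)%R by lia.
  rewrite hD; ring.
have h3 : (0 <= (m - 1) * (K - 2))%R.
  have hk : (0 <= K - 2)%R by lia.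
  have hm1 : (0 <= m - 1)%R by lia.
  clear -hk hm1; nia.
have hD : (1 <= D - 1)%R by lia.
have : (0 < (D - 1) * ((m - 1) * (K - 2) + 1))%R.
  clear -hD h3; nia.
lia.
Qed.

Lemma alg1k (a K j o s i : int) :
  (2 <= K -> 1 <= i ->
  K - 1 + K = a * K + (K + 1 - a) - K * K ->
  i + j * K + s = a * K + (K + 1 - a) - K * K ->
  K = i + j + o -> 1 <= j -> 1 <= o -> 2 * o <= s -> False)%R.
Proof.
move=> K2 i1 Hw Hp HD j1 o1 so.
have h : ((a - K - 2) * (K - 1) = 0)%R by lia.
have ha : a = (K + 2)%R.
  move/eqP: h; rewrite mulf_eq0 => /orP[]; move/eqP; lia.
subst a.
have h1 : (j * (K - 2) >= K - 2)%R.
  have hk : (0 <= K - 2)%R by lia.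
  clear -hk j1; nia.
lia.
Qed.

Lemma alg1 (a b : int) (K D i j o s : nat) :
  (K%:Z = a + b - 1)%R -> 2 <= K ->
  ((D + K.-1)%:Z = a * K%:Z + b - K%:Z ^+ 2)%R ->
  ((s + K * j + i)%:Z = a * D%:Z + b - D%:Z ^+ 2)%R ->
  D = o + j + i -> 1 <= j -> 1 <= o -> 2 * o <= s ->
  (0 < i -> D = K) -> False.
Proof.
move=> HK K2 Hw Hp HD j1 o1 so Hi.
have hb : b = (K%:Z + 1 - a)%R by lia.
subst b; rewrite !expr2 in Hw Hp.
case: (posnP i) => [i0|ip].
- subst i.
  apply: (@alg1i a K%:Z D%:Z j%:Z o%:Z s%:Z (a - K%:Z - 1)%R); lia.
- have DK := Hi ip; subst D.
  apply: (@alg1k a K%:Z j%:Z o%:Z s%:Z i%:Z); lia.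
Qed.

Lemma sum_pos (T : finType) (P : pred T) x : P x -> 0 < \sum_(v | P v) 1.
Proof. by move=> Px; rewrite (bigD1 x Px). Qed.

Lemma S21 (T : finType) (e : rel T) v :
  v \in prune e (prune e setT) -> v \in prune e setT.
Proof. by apply/subsetP; exact: prune_sub. Qed.

Lemma split3 (T : finType) (P Q R : pred T) (F : T -> nat) :
  \sum_(v | P v) F v = \sum_(v | (P v && Q v) && R v) F v
     + \sum_(v | (P v && Q v) && ~~ R v) F v + \sum_(v | P v && ~~ Q v) F v.
Proof. by rewrite (bigID Q) /= (bigID R (fun v => P v && Q v)). Qed.

Lemma deg_pos (T : finType) (e : rel T) v y : e v y -> 0 < deg e v.
Proof. by move=> evy; rewrite (deg_sum e v) (bigD1 y evy). Qed.

Lemma no_rank1 (T : finType) (e : rel T) (a b : int) (u : T) :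
  simple_graph e -> connected_graph e -> in_Gab e a b ->
  u \in prune e (prune e setT) -> (exists g, e u g /\ g \in prune e (prune e setT)) ->
  forall w, w \in prune e setT -> w \in prune e (prune e setT).
Proof.
move=> [sym irr] conn Gab uS2 [g0 [eug0 g0S2]] w wS1; apply/idPn => wS2.
have [Hdw [z [ewz dz]]] := rank1_pend wS1 wS2.
have HK : ((deg e w)%:Z = a + b - 1)%R by apply: (pend_supp Gab dz); rewrite sym.
have [p Hp] : exists p, [set v in prune e setT | e w v] = [set p] by apply/cards1P/eqP.
have [pS1 ewp] : p \in prune e setT /\ e w p.
  have : p \in [set v in prune e setT | e w v] by rewrite Hp set11.
  by rewrite mem_setin => /andP[].
have uniqp : forall v, e w v -> v \in prune e setT -> v = p.
  move=> v ewv vS1; have : v \in [set v in prune e setT | e w v] by rewrite mem_setin vS1 ewv.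
  by rewrite Hp inE => /eqP.
have Sw : \sum_(v | e w v) deg e v = deg e p + (deg e w).-1.
  rewrite (bigD1 p ewp) /=; congr (_ + _).
  rewrite (deg_sum e w) (bigD1 p ewp) /= add0n.
  apply: eq_bigr => v /andP[ewv vp].
  have : v \notin prune e setT by apply/negP => vS1; move: vp; rewrite (uniqp v ewv vS1) eqxx.
  by rewrite inS1 negbK => /eqP.
have K2 : 1 < deg e w.
  have h1 : deg e w != 1 by rewrite -inS1.
  have h2 := deg_pos ewp; clear -h1 h2; lia.
have Ew := (Gab.2 w); rewrite sumZ Sw in Ew.
case: (boolP [exists v, e p v && (v \in prune e (prune e setT))]) => [/existsP [g /andP [epg gS2]] | Hb].
- have Sp := split3 (e p) (fun v => v \in prune e setT) (fun v => v \in prune e (prune e setT)) (deg e).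
  have Dp : deg e p = \sum_(v | (e p v && (v \in prune e setT)) && (v \in prune e (prune e setT))) 1
     + \sum_(v | (e p v && (v \in prune e setT)) && ~~ (v \in prune e (prune e setT))) 1
     + \sum_(v | e p v && ~~ (v \in prune e setT)) 1.
    by rewrite (deg_sum e p) (split3 _ (fun v => v \in prune e setT) (fun v => v \in prune e (prune e setT))).
  have sI : \sum_(v | e p v && ~~ (v \in prune e setT)) deg e v =
            \sum_(v | e p v && ~~ (v \in prune e setT)) 1.
    by apply: eq_bigr => v /andP[_]; rewrite inS1 negbK => /eqP.
  have sJ : \sum_(v | (e p v && (v \in prune e setT)) && ~~ (v \in prune e (prune e setT))) deg e v =
     deg e w * \sum_(v | (e p v && (v \in prune e setT)) && ~~ (v \in prune e (prune e setT))) 1.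
    rewrite big_distrr /=; apply: eq_bigr => v /andP[/andP[epv vS1] vS2].
    have [_ [z' [evz' dz']]] := rank1_pend vS1 vS2.
    have Hv : ((deg e v)%:Z = a + b - 1)%R by apply: (pend_supp Gab dz'); rewrite sym.
    rewrite muln1; clear -HK Hv; lia.
  have sO : 2 * \sum_(v | (e p v && (v \in prune e setT)) && (v \in prune e (prune e setT))) 1 <=
     \sum_(v | (e p v && (v \in prune e setT)) && (v \in prune e (prune e setT))) deg e v.
    rewrite big_distrr /=; apply: leq_sum => v /andP[/andP[epv vS1] vS2].
    have h1 : deg e v != 1 by rewrite -inS1.
    have h2 : 0 < deg e v by apply: (deg_pos (y := p)); rewrite sym.
    rewrite muln1; clear -h1 h2; lia.
  have j1 : 0 < \sum_(v | (e p v && (v \in prune e setT)) && ~~ (v \in prune e (prune e setT))) 1.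
    by apply: (sum_pos (x := w)); rewrite -sym ewp wS1 wS2.
  have o1 : 0 < \sum_(v | (e p v && (v \in prune e setT)) && (v \in prune e (prune e setT))) 1.
    by apply: (sum_pos (x := g)); rewrite epg gS2 S21.
  have Hi : 0 < \sum_(v | e p v && ~~ (v \in prune e setT)) 1 -> deg e p = deg e w.
    move=> /sum_pos_ex [y /andP[epy]]; rewrite inS1 negbK => /eqP dy.
    have Hv : ((deg e p)%:Z = a + b - 1)%R by apply: (pend_supp Gab dy); rewrite sym.
    clear -HK Hv; lia.
  have Ep := (Gab.2 p); rewrite sumZ Sp sI sJ in Ep.
  exact: (alg1 HK K2 Ew Ep Dp j1 o1 sO Hi).
- have Hb' : forall v, e p v -> v \notin prune e (prune e setT).
    move=> v epv; apply/negP => vS2; move: Hb; rewrite negb_exists => /forallP /(_ v).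
    by rewrite epv vS2.
  have Hr1 : forall y, e p y -> y \in prune e setT -> deg_in e (prune e setT) y = 1.
    move=> y epy yS1; exact: (rank1_pend yS1 (Hb' y epy)).1.
  set X := [set x | (x == p) || e p x || [exists y, e p y && e y x]].
  have pX : p \in X by rewrite inE eqxx.
  have inX2 : forall y, e p y -> y \in X by move=> y epy; rewrite inE epy orbT.
  have inX3 : forall y0 y, e p y0 -> e y0 y -> y \in X.
    by move=> y0 y epy0 ey0y; rewrite inE; apply/orP; right; apply/existsP; exists y0; rewrite epy0.
  have clX : forall x y, x \in X -> e x y -> y \in X.
    move=> x y; rewrite inE => /orP[/orP[/eqP->|epx]|/existsP[y0 /andP[epy0 ey0x]]] exy.
    + exact: inX2.
    + exact: (inX3 x).
    + case: (boolP (y0 \in prune e setT)) => y0S1.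
      * have d1 := Hr1 y0 epy0 y0S1.
        case: (boolP (x \in prune e setT)) => xS1.
        - have xp : x = p by apply: (deg_in1_uniq d1 xS1 pS1 ey0x); rewrite sym.
          by rewrite xp in exy; exact: inX2.
        - move: xS1; rewrite inS1 negbK => /eqP dx.
          have -> : y = y0 by apply: (deg1_uniq dx exy); rewrite sym.
          exact: inX2.
      * move: y0S1; rewrite inS1 negbK => /eqP dy0.
        have xp : x = p by apply: (deg1_uniq dy0 ey0x); rewrite sym.
        by rewrite xp in exy; exact: inX2.
  have uX : u \in X := closed_all conn clX (x0 := p) u pX.
  have up : u = p.
    move: uX; rewrite inE => /orP[/orP[/eqP//|epu]|/existsP[y0 /andP[epy0 ey0u]]].
    + by move: (Hb' u epu); rewrite uS2.
    + case: (boolP (y0 \in prune e setT)) => y0S1.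
      * apply: (deg_in1_uniq (Hr1 y0 epy0 y0S1) (S21 uS2) pS1 ey0u); by rewrite sym.
      * move: y0S1; rewrite inS1 negbK => /eqP dy0.
        by apply: (deg1_uniq dy0 ey0u); rewrite sym.
  rewrite up in eug0; move: (Hb' g0 eug0); by rewrite g0S2.
Qed.

Lemma two_other (T : finType) (A : {set T}) u (F : T -> nat) :
  #|A| = 2 -> u \in A ->
  exists x', [/\ x' \in A, x' != u & \sum_(y in A) F y = F u + F x'].
Proof.
move/eqP/cards2P => [y1 [y2 [y12 ->]]].
have Hs : \sum_(y in [set y1; y2]) F y = F y1 + F y2.
  by rewrite big_setU1 ?big_set1 // inE.
rewrite !inE => /orP[]/eqP->.
- by exists y2; split; [rewrite !inE eqxx orbT | rewrite eq_sym | rewrite Hs].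
- by exists y1; split; [rewrite !inE eqxx | | rewrite Hs addnC].
Qed.

Lemma two_set3 (T : finType) (A : {set T}) x1 x2 x3 : #|A| = 2 ->
  x1 \in A -> x2 \in A -> x3 \in A -> x1 != x2 -> x1 != x3 -> x2 != x3 -> False.
Proof.
move/eqP/cards2P => [y1 [y2 [y12 ->]]]; rewrite !inE.
by move=> /orP[]/eqP-> /orP[]/eqP-> /orP[]/eqP->; rewrite ?eqxx.
Qed.

Lemma alg2 (a k D : int) (s : nat) :
  (3 <= k -> (D = 6 \/ (D = k /\ 7 <= k)) -> (s <= 6)%N ->
  (D - 6) + (6 - s%:Z) * 2 + s%:Z * k = a * D + (k + 1 - a) - D * D ->
  ((1 <= s)%N -> exists2 dx, dx = 2 \/ dx = k & (k - 2) + D + dx = a * k + (k + 1 - a) - k * k) ->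
  ((s <= 5)%N -> exists2 dy, dy = 2 \/ dy = k & D + dy = a * 2 + (k + 1 - a) - 2 * 2) ->
  D = 6 /\ a = 9 /\ s = 1%N /\ (k = 6 \/ k = 7))%R.
Proof.
move=> k3 HD s6 Hu Hx Hy.
case: s s6 Hu Hx Hy => [|[|[|[|[|[|[|s]]]]]]] //= s6 Hu Hx Hy.
all: try (have [dy [->|->] Hdy] := Hy isT).
all: try (have [dx [->|->] Hdx] := Hx isT).
all: case: HD => [HD|[HD k7]]; subst D.
all: try nia.
Qed.

Lemma part2 (T : finType) (e : rel T) (a b : int) (B : {set T}) (u : T) :
  simple_graph e -> connected_graph e -> in_Gab e a b ->
  (forall v, v \in B \/ deg e v = 1) -> u \in B ->
  #|[set y in B | e u y]| = 6 ->
  (forall x, x \in B -> x != u -> #|[set y in B | e x y]| = 2) ->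
  (exists v, deg e v = 1) -> False.
Proof.
move=> [sym irr] conn Gab cov uB Hu6 Hx2 [v0 dv0].
have NBdeg : forall x, #|[set y in B | e x y]| <= deg e x.
  by move=> x; apply: subset_leq_card; apply/subsetP => y; rewrite !inE => /andP[].
have Bdeg : forall x, x \in B -> 2 <= deg e x.
  move=> x xB; have := NBdeg x; case: (eqVneq x u) => [->|xu]; first by rewrite Hu6; lia.
  by rewrite (Hx2 x xB xu).
have [y0 ev0y0] : exists y, e v0 y.
  have : #|[set w | e v0 w]| == 1 by apply/eqP.
  move/cards1P => [y Hy]; exists y.
  have : y \in [set w | e v0 w] by rewrite Hy set11.
  by rewrite inE.
have v0B : v0 \notin B by apply/negP => /Bdeg; rewrite dv0.
have y0B : y0 \in B.
  case: (cov y0) => // dy0; exfalso.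
  set X := [set v0; y0].
  have clX : forall x y, x \in X -> e x y -> y \in X.
    move=> x y; rewrite !inE => /orP[]/eqP-> exy.
    - by rewrite (deg1_uniq dv0 exy ev0y0) eqxx orbT.
    - by rewrite (deg1_uniq dy0 exy (_ : e y0 v0)) ?eqxx // sym.
  have := closed_all conn clX (x0 := v0) u; rewrite !inE eqxx => /(_ isT) /orP[]/eqP uv.
  - by move: uB; rewrite uv (negbTE v0B).
  - by have := Bdeg u uB; rewrite uv dy0.
set kn := deg e y0.
have Hkn : (kn%:Z = a + b - 1)%R := pend_supp Gab dv0 ev0y0.
pose t x := \sum_(w | e x w && (w \notin B)) 1.
have Fdeg : forall x, deg e x = #|[set y in B | e x y]| + t x.
  move=> x; rewrite (deg_sum e x) (bigID (fun w => w \in B)) /=; congr (_ + _).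
  by rewrite -sum1_card; apply: eq_bigl => w; rewrite !inE andbC.
have Fsum : forall x, \sum_(w | e x w) deg e w = \sum_(w in [set y in B | e x y]) deg e w + t x.
  move=> x; rewrite (bigID (fun w => w \in B)) /=; congr (_ + _).
    by apply: eq_bigl => w; rewrite !inE andbC.
  apply: eq_bigr => w /andP[_ wB]; case: (cov w) => //; by rewrite (negbTE wB).
have Ft : forall x, 0 < t x -> deg e x = kn.
  move=> x /sum_pos_ex [w /andP[exw wB]].
  have dw : deg e w = 1 by case: (cov w) => //; rewrite (negbTE wB).
  have Hx : ((deg e x)%:Z = a + b - 1)%R by apply: (pend_supp Gab dw); rewrite sym.
  clear -Hx Hkn; lia.
have Hdeg2 : forall x, x \in B -> x != u -> deg e x = 2 + t x.
  by move=> x xB xu; rewrite Fdeg Hx2.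
have Hdk : forall x, x \in B -> x != u -> deg e x = 2 \/ deg e x = kn.
  move=> x xB xu; case: (posnP (t x)) => [t0|tp]; last by right; apply: Ft.
  by left; rewrite Hdeg2 // t0.
have kn3 : 3 <= kn.
  have tp : 0 < t y0 by apply: (sum_pos (x := v0)); rewrite -sym ev0y0.
  have NBy : 2 <= #|[set y in B | e y0 y]|.
    by case: (eqVneq y0 u) => [->|yu]; [rewrite Hu6 | rewrite Hx2].
  rewrite /kn Fdeg; lia.
have NBu_ne : forall y, y \in [set y in B | e u y] -> [/\ y \in B, e u y & y != u].
  move=> y; rewrite inE => /andP[yB euy]; split => //; apply/eqP => yu; move: euy; by rewrite yu irr.
have other : forall x y, x \in B -> x != u -> y \in B -> e x y ->
    exists x', [/\ x' \in B, e x x', x' != y &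
      \sum_(w in [set z in B | e x z]) deg e w = deg e y + deg e x'].
  move=> x y xB xu yB exy.
  have yN : y \in [set z in B | e x z] by rewrite inE yB exy.
  have [x' [x'A x'y Hs]] := @two_other T [set z in B | e x z] y (deg e) (Hx2 x xB xu) yN.
  by move: x'A; rewrite inE => /andP[x'B exx']; exists x'.
set NBu := [set y in B | e u y].
set Kset := [set y | deg e y == kn].
set s := #|NBu :&: Kset|.
have Hcard : s + #|NBu :\: Kset| = 6 by rewrite cardsID.
have Hsig : \sum_(y in NBu) deg e y = (6 - s) * 2 + s * kn.
  rewrite (big_setID Kset) /=.
  rewrite (eq_bigr (fun _ => kn)); last by move=> y /setIP [_]; rewrite inE => /eqP.
  rewrite sum_nat_const.
  rewrite (eq_bigr (fun _ => 2)); last first.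
    move=> y /setDP [yN yK]; have [yB euy yu] := NBu_ne y yN.
    by case: (Hdk y yB yu) => // dk; move: yK; rewrite inE dk eqxx.
  rewrite sum_nat_const -/s; lia.
have Eu := Gab.2 u; rewrite sumZ Fsum -/NBu Hsig in Eu.
have tu : deg e u = 6 + t u by rewrite Fdeg -/NBu Hu6.
have supp_step : forall x, x \in NBu :&: Kset -> exists x', [/\ x' \in B, x' != u &
     (((kn - 2) + deg e u + deg e x')%:Z = a * kn%:Z + b - kn%:Z ^+ 2)%R].
  move=> x /setIP [xN]; rewrite inE => /eqP dx.
  have [xB eux xu] := NBu_ne x xN.
  have exu : e x u by rewrite sym.
  have [x' [x'B exx' x'u Hs]] := other x u xB xu uB exu.
  exists x'; split => //.
  have Ex := Gab.2 x; rewrite sumZ Fsum Hs dx in Ex.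
  have := Hdeg2 x xB xu; rewrite dx => Htx.
  rewrite -Ex; clear -Htx kn3; lia.
have bare_step : forall y, y \in NBu :\: Kset -> deg e y = 2 /\ exists y', [/\ y' \in B, e y y', y' != u &
     ((deg e u + deg e y')%:Z = a * 2 + b - 2 ^+ 2)%R].
  move=> y /setDP [yN yK]; have [yB euy yu] := NBu_ne y yN.
  have dy : deg e y = 2.
    by case: (Hdk y yB yu) => // dk; move: yK; rewrite inE dk eqxx.
  split => //.
  have eyu : e y u by rewrite sym.
  have [y' [y'B eyy' y'u Hs]] := other y u yB yu uB eyu.
  exists y'; split => //.
  have Ey := Gab.2 y; rewrite sumZ Fsum Hs dy in Ey.
  have := Hdeg2 y yB yu; rewrite dy => Hty.
  rewrite -Ey; clear -Hty; lia.
have k3 : (3 <= kn%:Z)%R by lia.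
have H2 : ((deg e u)%:Z = 6 \/ ((deg e u)%:Z = kn%:Z /\ 7 <= kn%:Z))%R.
  case: (posnP (t u)) => [t0|tp]; [left; rewrite tu t0 // | right; have := Ft u tp; lia].
have H3 : s <= 6 by lia.
have H4 : (((deg e u)%:Z - 6) + (6 - s%:Z) * 2 + s%:Z * kn%:Z =
     a * (deg e u)%:Z + (kn%:Z + 1 - a) - (deg e u)%:Z * (deg e u)%:Z)%R.
  move: Eu; rewrite expr2 => Eu; lia.
have H5 : (1 <= s)%N -> exists2 dx : int, (dx = 2 \/ dx = kn%:Z)%R &
    (kn%:Z - 2 + (deg e u)%:Z + dx = a * kn%:Z + (kn%:Z + 1 - a) - kn%:Z * kn%:Z)%R.
  move=> s1; have /card_gt0P [x xK] : 0 < #|NBu :&: Kset| by [].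
  have [x' [x'B x'u Ex]] := supp_step x xK.
  exists (Posz (deg e x')); first by case: (Hdk x' x'B x'u) => ->; [left|right].
  move: Ex; rewrite expr2 => Ex; lia.
have H6 : (s <= 5)%N -> exists2 dy : int, (dy = 2 \/ dy = kn%:Z)%R &
    ((deg e u)%:Z + dy = a * 2 + (kn%:Z + 1 - a) - 2 * 2)%R.
  move=> s5; have /card_gt0P [y yD] : 0 < #|NBu :\: Kset| by lia.
  have [_ [y' [y'B _ y'u Ey]]] := bare_step y yD.
  exists (Posz (deg e y')); first by case: (Hdk y' y'B y'u) => ->; [left|right].
  move: Ey; rewrite expr2 => Ey; lia.
have [Du [a9 [s1 kn67]]] := alg2 k3 H2 H3 H4 H5 H6.
subst a.
have Hc5 : #|NBu :\: Kset| = 5 by lia.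
have key : forall y, y \in NBu :\: Kset -> exists y' z, [/\ y' \in B, y' != u, e y' y &
    deg e y' = kn] /\ [/\ z \in B, e y' z & ((deg e z)%:Z = 9 * kn%:Z - 8 - kn%:Z * kn%:Z)%R].
  move=> y yD; have [dy [y' [y'B eyy' y'u Ey']]] := bare_step y yD.
  have yB : y \in B by move: yD => /setDP [/NBu_ne []].
  have dy' : deg e y' = kn by move: Ey'; rewrite expr2 => Ey'; lia.
  have ty' := Hdeg2 y' y'B y'u.
  have ey'y : e y' y by rewrite sym.
  have [z [zB ey'z zy Hs]] := other y' y y'B y'u yB ey'y.
  have Ey'2 := Gab.2 y'; rewrite sumZ Fsum Hs dy dy' in Ey'2.
  exists y', z; split; split => //.
  move: Ey'2; rewrite expr2 => Ey'2; clear -Ey'2 ty' dy' Hkn kn3; lia.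
have /card_gt0P [y yD] : 0 < #|NBu :\: Kset| by lia.
have [y' [z [[y'B y'u ey'y dy'] [zB ey'z dz]]]] := key y yD.
have dzB : deg e z = 6 \/ deg e z = 2 \/ deg e z = kn.
  case: (eqVneq z u) => [->|zu]; first by left; clear -Du; lia.
  by right; apply: Hdk.
case: kn67 => k67.
- move: dz dzB k67; clear; lia.
- have key7 : forall y, y \in NBu :\: Kset -> exists y', [/\ y' \in NBu :&: Kset, e y' y & y' != u].
    move=> y1 y1D; have [y1' [z1 [[y1'B y1'u ey1'y dy1'] [zB1 ey1'z dz1]]]] := key y1 y1D.
    have zu : z1 = u.
      case: (eqVneq z1 u) => // zu; exfalso.
      move: (Hdk z1 zB1 zu) dz1 k67; clear; lia.
    exists y1'; split => //.
    rewrite !inE y1'B dy1' eqxx andbT /= sym -zu //.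
  have /card_gt1P [y1 [y2 [y1D y2D y12]]] : 1 < #|NBu :\: Kset| by rewrite Hc5.
  have [x1 [x1K ex1y1 x1u]] := key7 y1 y1D.
  have [x2 [x2K ex2y2 x2u]] := key7 y2 y2D.
  have /cards1P [x Hx] : #|NBu :&: Kset| == 1 by apply/eqP.
  move: (x1K) (x2K); rewrite Hx !inE => /eqP ex1 /eqP ex2; subst x1 x2.
  have [xB eux xu] : [/\ x \in B, e u x & x != u] by move: x1K => /setIP [/NBu_ne].
  have [y1B euy1 y1u] : [/\ y1 \in B, e u y1 & y1 != u] by move: y1D => /setDP [/NBu_ne].
  have [y2B euy2 y2u] : [/\ y2 \in B, e u y2 & y2 != u] by move: y2D => /setDP [/NBu_ne].
  apply: (two_set3 (Hx2 x xB xu) (x1 := u) (x2 := y1) (x3 := y2)).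
  + by rewrite inE uB sym.
  + by rewrite inE y1B.
  + by rewrite inE y2B.
  + by rewrite eq_sym.
  + by rewrite eq_sym.
  + exact: y12.
Qed.

Lemma cyc_nbr (T : finType) (e : rel T) (c : seq T) (x : T) :
  is_cycle e c -> x \in c ->
  [/\ next c x \in c, prev c x \in c, next c x != x, prev c x != x
    & next c x != prev c x].
Proof.
case/and3P=> Uc Sc _ xc.
rewrite mem_next mem_prev xc.
case: (rot_to xc) => i s' Hr.
have Ur : uniq (rot i c) by rewrite rot_uniq.
have Sr : 3 <= size (rot i c) by rewrite size_rot.
rewrite -(next_rot i Uc) -(prev_rot i Uc).
have [y [z [r Hs]]] : exists y z r, s' = y :: z :: r.
  move: Sr; rewrite Hr; case: s' {Hr} => [|y [|z r]] //= _; by exists y, z, r.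
rewrite Hs in Hr.
have np := next_prev Ur x.
have Ur2 : uniq [:: x, y, z & r] by rewrite -Hr.
move: Ur2; rewrite /= !inE !negb_or => /andP[/and3P[xy xz xr] /andP[/andP[yz yr] _]].
have nx : next (rot i c) x = y by rewrite Hr /= eqxx.
have ny : next (rot i c) y = z by rewrite Hr /= eq_sym (negbTE xy) eqxx.
rewrite nx eq_sym xy; split => //.
- apply/eqP => Hp; move: np; rewrite Hp nx => /eqP; by rewrite eq_sym (negbTE xy).
- apply/eqP => Hp; move: np; rewrite -Hp ny => /eqP; by rewrite eq_sym (negbTE xz).
Qed.

Lemma cyc_edge_iff (T : finType) (e : rel T) c x y : is_cycle e c -> x \in c ->
  cycle_edge c x y = (y == next c x) || (y == prev c x).
Proof.
move=> Hc xc; have Uc : uniq c by case/and3P: Hc.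
rewrite /cycle_edge xc /=; apply/idP/idP.
- case/andP => yc /orP[/eqP <-|/eqP ny]; first by rewrite eqxx.
  by rewrite -ny prev_next // eqxx orbT.
- case/orP => /eqP ->.
  + by rewrite mem_next xc eqxx.
  + by rewrite mem_prev xc next_prev // eqxx orbT.
Qed.

Lemma disj2 (T : finType) (u : T) (X Y A1 A2 : {set T}) :
  X :&: Y = [set u] -> A1 \subset X -> A2 \subset Y -> u \notin A1 -> A1 :&: A2 = set0.
Proof.
move=> I s1 s2 uA; apply/setP => y; rewrite !inE; apply/negP => /andP[y1 y2].
have : y \in X :&: Y by rewrite inE (subsetP s1 _ y1) (subsetP s2 _ y2).
by rewrite I inE => /eqP yu; move: uA; rewrite -yu y1.
Qed.

Lemma struct (T : finType) (e : rel T) u : simple_graph e -> three_cycles_at e (base e) u ->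
  [/\ u \in base e, #|[set y in base e | e u y]| = 6,
      (forall x, x \in base e -> x != u -> #|[set y in base e | e x y]| = 2)
    & exists g, e u g /\ g \in base e].
Proof.
move=> [sym irr] [c1 [c2 [c3 [/and3P[H1 H2 H3] [I12 I13 I23] HB He]]]].
set B := base e in HB He *.
have inB : forall x, (x \in B) = [|| x \in c1, x \in c2 | x \in c3].
  by move=> x; rewrite HB !inE orbA.
have [uc1 uc2] : u \in c1 /\ u \in c2.
  have : u \in [set x in c1] :&: [set x in c2] by rewrite I12 set11.
  by rewrite !inE => /andP[].
have uc3 : u \in c3.
  have : u \in [set x in c1] :&: [set x in c3] by rewrite I13 set11.
  by rewrite !inE => /andP[].
have uB : u \in B by rewrite inB uc1.
have NBe : forall x, x \in B -> [set y in B | e x y] =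
    [set y | [|| cycle_edge c1 x y, cycle_edge c2 x y | cycle_edge c3 x y]].
  move=> x xB; apply/setP => y; rewrite !inE.
  case yB: (y \in B); first by rewrite He.
  symmetry; apply/negbTE; rewrite !negb_or; apply/and3P; split;
    apply/negP => /andP[/andP[_ yc] _]; by move: yB; rewrite inB yc ?orbT.
have ce0 : forall (c : seq T) (x y : T), x \notin c -> cycle_edge c x y = false.
  by move=> c x y xc; rewrite /cycle_edge (negbTE xc).
have card_one : forall (c : seq T) (x : T), is_cycle e c -> x \in c -> #|[set y | cycle_edge c x y]| = 2.
  move=> c x Hc xc; have [_ _ _ _ np] := cyc_nbr Hc xc.
  rewrite (_ : [set y | cycle_edge c x y] = [set next c x; prev c x]) ?cards2 ?np //.
  by apply/setP => y; rewrite !inE (cyc_edge_iff _ Hc xc).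
split => //.
- rewrite NBe //.
  have [n1c p1c n1u p1u np1] := cyc_nbr H1 uc1.
  have [n2c p2c n2u p2u np2] := cyc_nbr H2 uc2.
  have [n3c p3c n3u p3u np3] := cyc_nbr H3 uc3.
  have -> : [set y | [|| cycle_edge c1 u y, cycle_edge c2 u y | cycle_edge c3 u y]] =
      [set next c1 u; prev c1 u] :|: [set next c2 u; prev c2 u] :|: [set next c3 u; prev c3 u].
    apply/setP => y; rewrite !inE (cyc_edge_iff _ H1 uc1) (cyc_edge_iff _ H2 uc2) (cyc_edge_iff _ H3 uc3).
    by rewrite !orbA.
  have sub : forall (c : seq T) n p, n \in c -> p \in c -> [set n; p] \subset [set x in c].
    by move=> c n p nc pc; apply/subsetP => y; rewrite !inE => /orP[]/eqP->.
  have nu : forall n p, n != u -> p != u -> u \notin [set n; p].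
    by move=> n p nu pu; rewrite !inE !(eq_sym u) negb_or nu pu.
  have d12 := disj2 I12 (sub _ _ _ n1c p1c) (sub _ _ _ n2c p2c) (nu _ _ n1u p1u).
  have d13 := disj2 I13 (sub _ _ _ n1c p1c) (sub _ _ _ n3c p3c) (nu _ _ n1u p1u).
  have d23 := disj2 I23 (sub _ _ _ n2c p2c) (sub _ _ _ n3c p3c) (nu _ _ n2u p2u).
  rewrite cardsU cardsU (setIUl [set next c1 u; prev c1 u] [set next c2 u; prev c2 u]) d12 d13 d23 setU0 cards0 !cards2 np1 np2 np3.
  by [].
- move=> x xB xu.
  have nI : forall (X Y : seq T), [set x in X] :&: [set x in Y] = [set u] -> x \in X -> x \in Y -> False.
    move=> X Y I xX xY; have : x \in [set x in X] :&: [set x in Y] by rewrite !inE xX xY.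
    by rewrite I inE (negbTE xu).
  rewrite NBe //; move: xB; rewrite inB => /or3P[xc|xc|xc].
  + have xc2 : x \notin c2 by apply/negP => /(nI _ _ I12 xc).
    have xc3 : x \notin c3 by apply/negP => /(nI _ _ I13 xc).
    rewrite -(card_one c1 x H1 xc) (_ : [set y | [|| cycle_edge c1 x y, cycle_edge c2 x y | cycle_edge c3 x y]] = [set y | cycle_edge c1 x y]) //.
    by apply/setP => y; rewrite !inE (ce0 c2) // (ce0 c3) // ?orbF.
  + have xc1 : x \notin c1 by apply/negP => xc1; exact: (nI _ _ I12 xc1 xc).
    have xc3 : x \notin c3 by apply/negP => /(nI _ _ I23 xc).
    rewrite -(card_one c2 x H2 xc) (_ : [set y | [|| cycle_edge c1 x y, cycle_edge c2 x y | cycle_edge c3 x y]] = [set y | cycle_edge c2 x y]) //.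
    by apply/setP => y; rewrite !inE (ce0 c1) // (ce0 c3) // ?orbF.
  + have xc1 : x \notin c1 by apply/negP => xc1; exact: (nI _ _ I13 xc1 xc).
    have xc2 : x \notin c2 by apply/negP => xc2; exact: (nI _ _ I23 xc2 xc).
    rewrite -(card_one c3 x H3 xc) (_ : [set y | [|| cycle_edge c1 x y, cycle_edge c2 x y | cycle_edge c3 x y]] = [set y | cycle_edge c3 x y]) //.
    by apply/setP => y; rewrite !inE (ce0 c1) // (ce0 c2) // ?orbF.
- exists (next c1 u); have gB : next c1 u \in B by rewrite inB mem_next uc1.
  by rewrite He // (cyc_edge_iff _ H1 uc1) eqxx.
Qed.

Unset Implicit Arguments.

Theorem proposition2 (T : finType) (e : rel T) :
  simple_graph e -> tricyclic e -> (exists v, pendant e v) ->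
  (exists u : T, three_cycles_at e (base e) u) ->
  forall a b : int, ~ in_Gab e a b.
Proof.
move=> Hs [conn _] [v0 pv0] [u Hu] a b Gab.
have [uB Hu6 Hx2 [g [eug gB]]] := struct Hs Hu.
have gu : g != u by apply/eqP => gu; move: eug; rewrite gu (Hs.2 u).
have T2 : 2 <= #|T|.
  rewrite -cardsT; apply/card_gt1P; exists u, g; by rewrite !in_setT eq_sym.
have baseS2 : base e \subset prune e (prune e setT) := iter_sub e T2.
have cov : forall v, v \in base e \/ deg e v = 1.
  move=> v; case: (eqVneq (deg e v) 1) => [->|dv]; [by right|left].
  have vS1 : v \in prune e setT by rewrite inS1.
  apply/idPn => vB.
  have [r [r0 vr vr1]] := findrank (n := #|T|) vS1 vB.
  have [w [wS1 wS2]] := desc r0 vr vr1.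
  have := no_rank1 Hs conn Gab (subsetP baseS2 _ uB)
     (ex_intro _ g (conj eug (subsetP baseS2 _ gB))) wS1.
  by rewrite (negbTE wS2).
apply: (part2 Hs conn Gab cov uB Hu6 Hx2).
by exists v0; apply/eqP.
Qed.
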